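(* Let $k,n\ge1$, $T:\{0,1\}^k\to\{0,1\}$ a truth table, and $\gamma\in\mathbb R$. For every triple $(\mathbf z^{[1]},\mathbf z^{[0]},\mathbf z^{[-1]})$ of $n$-bit strings with configuration basis numbers $\mathbf n=(n_s)_{s\in\{0,1\}^3}$, $$\mathbf E_\sigma\Big[\exp\Big(-\tfrac{i\gamma}{2}\big(\mathbf 1[\mathbf z^{[1]}\vdash\sigma]-\mathbf 1[\mathbf z^{[-1]}\vdash\sigma]\big)\Big)\mathbf 1[\mathbf z^{[0]}\vdash\sigma]\Big]=2^{-k}\sum_{\mathbf y\in\{0,1\}^3}\sum_{\mathbf k\in\mathcal P(k)}\big|\mathcal Z(\mathbf y,\mathbf k)\big|\Big(\prod_{s\in\{0,1\}^3}\Big(\frac{n_s+n_{\bar s}}{n}\Big)^{k_s}\Big)\exp\Big(-\tfrac{i\gamma}{2}(y^{[1]}-y^{[-1]})\Big)y^{[0]}.$$ In particular, this expectation depends on the triple only through the reduced configuration basis numbers $n_{0ab}+n_{1\bar a\bar b}$, $a,b\in\{0,1\}$, and is a polynomial in them.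
   Context: A clause on $n$ variables is $\sigma=((l_0,\nu_0),\dots,(l_{k-1},\nu_{k-1}))$ with $l_q\in\{0,\dots,n-1\}$, $\nu_q\in\{0,1\}$; $\mathbf x\in\{0,1\}^n$ satisfies $\sigma$ ($\mathbf x\vdash\sigma$) iff $T(x_{l_0}\oplus\nu_0,\dots,x_{l_{k-1}}\oplus\nu_{k-1})=1$. A random clause has all $l_q$ independent uniform in $\{0,\dots,n-1\}$ (repetitions allowed) and all $\nu_q$ independent uniform in $\{0,1\}$; $\mathbf E_\sigma$ is expectation over it. Configuration basis numbers of a triple of $q$-bit strings: $q_s=|\{j:(w^{[1]}_j,w^{[0]}_j,w^{[-1]}_j)=s\}|$, $s=s^{[1]}s^{[0]}s^{[-1]}\in\{0,1\}^3$; $\bar s$ (and $\bar a$ for a bit $a$) denotes complement. $\mathcal P(k)$ is the set of families $(k_s)_{s\in\{0,1\}^3}$ of nonnegative integers summing to $k$. $\mathcal Z(\mathbf y,\mathbf k)$ is the set of triples $(\mathbf w^{[1]},\mathbf w^{[0]},\mathbf w^{[-1]})$ of $k$-bit strings with $T(\mathbf w^{[t]})=y^{[t]}$ for all $t\in\{1,0,-1\}$ and configuration basis numbers $\mathbf k$. *)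

(* Defs.v *)
From HB Require Import structures.
From mathcomp Require Import all_boot all_order all_algebra.
From mathcomp Require Import all_classical all_reals all_analysis.
From mathcomp Require Import complex.
Set Implicit Arguments. Unset Strict Implicit. Unset Printing Implicit Defensive.
Import Order.TTheory GRing.Theory Num.Theory.
Local Open Scope ring_scope.
Local Open Scope complex_scope.

Definition bits (m : nat) := {ffun 'I_m -> bool}.

(* elements s = s^[1] s^[0] s^[-1] of {0,1}^3, encoded as ((s1, s0), sm1) *)
Definition triple := (bool * bool * bool)%type.
Definition t1 (s : triple) : bool := s.1.1.
Definition t0 (s : triple) : bool := s.1.2.
Definition tm1 (s : triple) : bool := s.2.
Definition tcomp (s : triple) : triple := (~~ t1 s, ~~ t0 s, ~~ tm1 s).

Definition cbn (m : nat) (w1 w0 wm1 : bits m) (s : triple) : nat :=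
  #|[set j : 'I_m | (w1 j, w0 j, wm1 j) == s]|.

(* a clause: ((l_0,nu_0),...,(l_{k-1},nu_{k-1})) *)
Definition clause (k n : nat) := {ffun 'I_k -> 'I_n * bool}.

Definition sat (k n : nat) (T : bits k -> bool) (x : bits n) (sigma : clause k n)
  : bool := T [ffun q => x (sigma q).1 (+) (sigma q).2].

(* E_sigma: expectation over a uniformly random clause (l_q uniform in
   {0..n-1}, nu_q uniform in {0,1}, all independent), i.e. the uniform
   average over the (2n)^k clauses. *)
Definition Eclause (R : rcfType) (k n : nat) (f : clause k n -> R[i]) : R[i] :=
  ((n ^ k * 2 ^ k)%N%:R)^-1 * \sum_(sigma : clause k n) f sigma.

Definition expi (R : realType) (t : R) : R[i] := cos t +i* sin t.

Definition Pk (k : nat) : {set {ffun triple -> 'I_k.+1}} :=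
  [set kk : {ffun triple -> 'I_k.+1} | \sum_(s : triple) (kk s : nat) == k].

Definition Zset (k : nat) (T : bits k -> bool) (y : triple)
  (kk : {ffun triple -> 'I_k.+1}) : {set bits k * bits k * bits k} :=
  [set w | [&& T w.1.1 == t1 y, T w.1.2 == t0 y, T w.2 == tm1 y &
            [forall s : triple, cbn w.1.1 w.1.2 w.2 s == kk s]]].

Definition clause_expect (R : realType) (k n : nat) (T : bits k -> bool) (gamma : R)
  (z1 z0 zm1 : bits n) : R[i] :=
  Eclause (fun sigma : clause k n =>
    expi (- (gamma / 2) * ((sat T z1 sigma)%:R - (sat T zm1 sigma)%:R))
    * ((sat T z0 sigma)%:R)%:C).

Definition reduced (n : nat) (z1 z0 zm1 : bits n) (a b : bool) : nat :=
  (cbn z1 z0 zm1 (false, a, b) + cbn z1 z0 zm1 (true, ~~ a, ~~ b))%N.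

(* Main.v *)
Require Import Defs.
From HB Require Import structures.
From mathcomp Require Import all_boot all_order all_algebra.
From mathcomp Require Import all_classical all_reals all_analysis.
From mathcomp Require Import complex.
Import Order.TTheory GRing.Theory Num.Theory.
Local Open Scope ring_scope.
Local Open Scope complex_scope.
Section Main.
Variables (R : realType) (k n : nat) (T : bits k -> bool) (gamma : R)
  (z1 z0 zm1 : bits n).

Definition gfun (y1 y0 ym1 : bool) : R[i] :=
  expi (- (gamma / 2) * (y1%:R - ym1%:R)) * (y0%:R)%:C.
Definition phi (p : 'I_n * bool) : triple :=
  (z1 p.1 (+) p.2, z0 p.1 (+) p.2, zm1 p.1 (+) p.2).
Definition hmap (sigma : clause k n) : {ffun 'I_k -> triple} :=
  [ffun q => phi (sigma q)].
Definition f1 (u : {ffun 'I_k -> triple}) : bits k := [ffun q => t1 (u q)].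
Definition f0 (u : {ffun 'I_k -> triple}) : bits k := [ffun q => t0 (u q)].
Definition fm1 (u : {ffun 'I_k -> triple}) : bits k := [ffun q => tm1 (u q)].
Definition G u := gfun (T (f1 u)) (T (f0 u)) (T (fm1 u)).
Definition cc s := (cbn z1 z0 zm1 s + cbn z1 z0 zm1 (tcomp s))%N.

Lemma LHS1 : clause_expect T gamma z1 z0 zm1 =
  ((n ^ k * 2 ^ k)%N%:R)^-1 * \sum_(sigma : clause k n) G (hmap sigma).
Proof.
rewrite /clause_expect /Eclause; congr (_ * _); apply: eq_bigr => sigma _.
rewrite /G /gfun /sat; congr (expi (_ * (_ - _)) * ((T _)%:R)%:C);
  [congr ((T _)%:R) | congr ((T _)%:R) | ];
  by apply/ffunP => q; rewrite !ffunE.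
Qed.

Lemma card_sum (A : finType) (P : pred A) :
  (#|[set j | P j]|%:R : R[i]) = \sum_j ((P j)%:R).
Proof.
rewrite -sum1_card natr_sum big_mkcond /=; apply: eq_bigr => j _.
by rewrite inE; case: (P j).
Qed.

Lemma count_phi t : \sum_(p : 'I_n * bool) ((phi p == t)%:R : R[i]) = (cc t)%:R.
Proof.
rewrite -(pair_big xpredT xpredT (fun l b => ((phi (l, b) == t)%:R : R[i]))) /=.
rewrite /cc natrD /cbn !card_sum -big_split /=; apply: eq_bigr => l _.
rewrite big_bool /= addrC; congr (_%:R + _%:R).
  by rewrite /phi /=; case: (z1 l) (z0 l) (zm1 l) t => [] [] [] [[[] []] []].
by rewrite /phi /tcomp /=; case: (z1 l) (z0 l) (zm1 l) t => [] [] [] [[[] []] []].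
Qed.

Lemma hcount u :
  \sum_(sigma : clause k n) ((hmap sigma == u)%:R : R[i]) = \prod_q (cc (u q))%:R.
Proof.
transitivity (\prod_q \sum_(p : 'I_n * bool) ((phi p == u q)%:R : R[i]));
  last by apply: eq_bigr => q _; rewrite count_phi.
rewrite bigA_distr_bigA /=; apply: eq_bigr => sigma _.
case: eqP => [<-|neq].
  by rewrite big1 // => q _; rewrite ffunE eqxx.
case: (pickP (fun q => phi (sigma q) != u q)) => [q hq | none].
  by rewrite (bigD1 q) //= (negbTE hq) mul0r.
exfalso; apply: neq; apply/ffunP => q; rewrite ffunE.
by move: (none q) => /= /negbFE /eqP.
Qed.

Lemma LHS2 : \sum_(sigma : clause k n) G (hmap sigma) =
  \sum_(u : {ffun 'I_k -> triple}) (\prod_q (cc (u q))%:R) * G u.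
Proof.
transitivity (\sum_(sigma : clause k n) \sum_u ((hmap sigma == u)%:R * G u)).
  apply: eq_bigr => sigma _.
  rewrite (bigD1 (hmap sigma)) //= eqxx mul1r big1 ?addr0 // => u hu.
  by rewrite eq_sym (negbTE hu) mul0r.
rewrite exchange_big; apply: eq_bigr => u _; by rewrite -mulr_suml hcount.
Qed.

Definition W := (bits k * bits k * bits k)%type.
Definition toW (u : {ffun 'I_k -> triple}) : W := (f1 u, f0 u, fm1 u).
Definition ofW (w : W) : {ffun 'I_k -> triple} := [ffun q => (w.1.1 q, w.1.2 q, w.2 q)].
Lemma ofWK : cancel ofW toW.
Proof.
case=> [[a b] c]; rewrite /toW /f1 /f0 /fm1 /=.
by congr (_, _, _); apply/ffunP => q; rewrite !ffunE.
Qed.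
Lemma toWK : cancel toW ofW.
Proof. by move=> u; apply/ffunP => q; rewrite !ffunE /=; case: (u q) => [[? ?] ?]. Qed.

Definition cbw (w : W) s := cbn w.1.1 w.1.2 w.2 s.

Lemma cbw_ofW w s : cbw w s = #|[set j | ofW w j == s]|.
Proof. by apply: eq_card => j; rewrite !inE ffunE. Qed.

Lemma prod_part (f : triple -> R[i]) (u : {ffun 'I_k -> triple}) :
  \prod_q f (u q) = \prod_s f s ^+ #|[set j | u j == s]|.
Proof.
rewrite (partition_big u xpredT) //=; apply: eq_bigr => s _.
rewrite (eq_bigr (fun _ => f s)); last by move=> q /eqP ->.
rewrite (eq_bigl (fun j => j \in [set j | u j == s])) ?prodr_const //.
by move=> j; rewrite inE.
Qed.

Lemma cbw_lt w s : (cbw w s < k.+1)%N.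
Proof. by rewrite ltnS /cbw /cbn; apply: leq_trans (max_card _) _; rewrite card_ord. Qed.

Definition kk0 (w : W) : {ffun triple -> 'I_k.+1} := [ffun s => inord (cbw w s)].
Lemma kk0E w s : (kk0 w s : nat) = cbw w s.
Proof. by rewrite ffunE inordK // cbw_lt. Qed.

Lemma sum_cbw w : (\sum_s cbw w s)%N = k.
Proof.
transitivity (\sum_s \sum_(j | ofW w j == s) 1)%N.
  apply: eq_bigr => s _; rewrite cbw_ofW -sum1_card; apply: eq_bigl => j; by rewrite inE.
rewrite -(@partition_big _ _ _ _ _ _ xpredT (ofW w) xpredT (fun _ => 1%N)) //.
by rewrite sum1_card card_ord.
Qed.

Lemma kk0_Pk w : kk0 w \in Pk k.
Proof.
rewrite inE; apply/eqP; apply: etrans (sum_cbw w); apply: eq_bigr => s _.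
by rewrite kk0E.
Qed.

Definition yk (w : W) := ((T w.1.1, T w.1.2, T w.2), kk0 w).

Lemma memZ y kk w : (w \in Zset T y kk) = (yk w == (y, kk)).
Proof.
case: y => [[y1 y0] ym1]; rewrite inE /yk !xpair_eqE /t1 /t0 /tm1 /= !andbA.
congr (_ && _); apply/forallP/eqP => [h | <- s].
  by apply/ffunP => s; apply: val_inj; rewrite /= kk0E /cbw (eqP (h s)).
by rewrite kk0E.
Qed.

Definition H (w : W) : R[i] :=
  (\prod_s (((cc s)%:R / n%:R) ^+ cbw w s)) * gfun (T w.1.1) (T w.1.2) (T w.2).

Lemma RHS1 :
  \sum_(y : triple) \sum_(kk in Pk k)
      (#|Zset T y kk|%:R
       * \prod_(s : triple)
           (((cbn z1 z0 zm1 s + cbn z1 z0 zm1 (tcomp s))%N%:R / n%:R) ^+ (kk s : nat))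
       * expi (- (gamma / 2) * ((t1 y)%:R - (tm1 y)%:R))
       * ((t0 y)%:R)%:C)
  = \sum_(w : W) H w.
Proof.
transitivity (\sum_(y : triple) \sum_(kk in Pk k) \sum_(w in Zset T y kk) H w).
  apply: eq_bigr => y _; apply: eq_bigr => kk _.
  rewrite [RHS](eq_bigr (fun _ => (\prod_s (((cc s)%:R / n%:R) ^+ (kk s : nat)))
                      * gfun (t1 y) (t0 y) (tm1 y))); last first.
    move=> w; rewrite inE => /and4P [/eqP e1 /eqP e0 /eqP em /forallP hk].
    rewrite /H e1 e0 em; congr (_ * _); apply: eq_bigr => s _.
    by rewrite /cbw (eqP (hk s)).
  by rewrite sumr_const -[RHS]mulr_natl /gfun !mulrA.
rewrite (partition_big yk (fun p => p.2 \in Pk k)); last by move=> w _; apply: kk0_Pk.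
rewrite -(pair_big_dep xpredT (fun _ kk => kk \in Pk k)
   (fun y kk => \sum_(w | true && (yk w == (y, kk))) H w)) /=.
apply: eq_bigr => y _; apply: eq_bigr => kk _; apply: eq_bigl => w.
by rewrite memZ.
Qed.

Lemma part1 : clause_expect T gamma z1 z0 zm1 =
    ((2 ^ k)%N%:R)^-1 *
    \sum_(y : triple) \sum_(kk in Pk k)
      (#|Zset T y kk|%:R
       * \prod_(s : triple)
           (((cbn z1 z0 zm1 s + cbn z1 z0 zm1 (tcomp s))%N%:R / n%:R) ^+ (kk s : nat))
       * expi (- (gamma / 2) * ((t1 y)%:R - (tm1 y)%:R))
       * ((t0 y)%:R)%:C).
Proof.
rewrite LHS1 LHS2 RHS1.
rewrite (reindex ofW) /=; last by exists toW => x _; [apply: ofWK | apply: toWK].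
rewrite natrM invfM [((n ^ k)%N%:R)^-1 * _]mulrC -mulrA; congr (_ * _).
rewrite mulr_sumr; apply: eq_bigr => w _.
rewrite (prod_part (fun s => (cc s)%:R)).
rewrite (eq_bigr (fun s => (cc s)%:R ^+ cbw w s)); last by move=> s _; rewrite cbw_ofW.
rewrite /H [in RHS](eq_bigr (fun s => (cc s)%:R ^+ cbw w s * (n%:R^-1) ^+ cbw w s));
  last by move=> s _; rewrite exprMn.
rewrite big_split /= prodrXr sum_cbw exprVn -natrX.
have : G (ofW w) = gfun (T w.1.1) (T w.1.2) (T w.2).
  by case: w => [[a b] c]; rewrite /G; case: (ofWK (a, b, c)) => -> -> ->.
move=> ->; rewrite mulrA [_ * (n ^ k)%N%:R^-1]mulrC.
by [].
Qed.

End Main.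

Theorem mainTheorem10 (R : realType) (k n : nat) (hk : (0 < k)%N) (hn : (0 < n)%N)
  (T : bits k -> bool) (gamma : R) (z1 z0 zm1 : bits n) :
  clause_expect T gamma z1 z0 zm1 =
    ((2 ^ k)%N%:R)^-1 *
    \sum_(y : triple) \sum_(kk in Pk k)
      (#|Zset T y kk|%:R
       * \prod_(s : triple)
           (((cbn z1 z0 zm1 s + cbn z1 z0 zm1 (tcomp s))%N%:R / n%:R) ^+ (kk s : nat))
       * expi (- (gamma / 2) * ((t1 y)%:R - (tm1 y)%:R))
       * ((t0 y)%:R)%:C)
  /\
  (forall z1' z0' zm1' : bits n,
     (forall a b : bool, reduced z1 z0 zm1 a b = reduced z1' z0' zm1' a b) ->
     clause_expect T gamma z1 z0 zm1 = clause_expect T gamma z1' z0' zm1').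
Proof.
split; first exact: part1.
move=> z1' z0' zm1' hred; rewrite !part1.
have hc : forall s, (cbn z1 z0 zm1 s + cbn z1 z0 zm1 (tcomp s))%N =
                    (cbn z1' z0' zm1' s + cbn z1' z0' zm1' (tcomp s))%N.
  case=> [[[] a] b]; rewrite /tcomp /t1 /t0 /tm1 /=.
    by move: (hred (~~ a) (~~ b)); rewrite /reduced !negbK addnC [X in _ = X]addnC.
  exact: hred.
congr (_ * _); apply: eq_bigr => y _; apply: eq_bigr => kk _.
congr (_ * _ * _ * _); apply: eq_bigr => s _; by rewrite hc.
Qed.
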